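(* Let $G=\langle V,E\rangle$ be a directed graph in which every vertex has a self-loop, let $P=\{\pi_1,\ldots,\pi_n\}$ be a plan for $n$ agents in $G$, and let $D\in\mathbb{N}$. If the ACID instance $(G,P,D)$ is solvable, then the ACID instance $(G,P,D')$ with $D'=(n-1)\cdot\|P\|$ is also solvable.
   Context: A path in $G$ is a sequence of vertices $\pi=v_1v_2\ldots v_m$ with $(v_k,v_{k+1})\in E$ for all $1\le k<m$; its length is its number of steps $m-1$. Agent $i$ has a source $s_i$ and goal $g_i$; a plan $P=\{\pi_1,\ldots,\pi_n\}$ is a set of paths where $\pi_i$ goes from $s_i$ to $g_i$. The sum-of-costs $\|P\|$ is the sum of the lengths of the paths in $P$. Two paths $v_1\ldots v_k$ and $u_1\ldots u_k$ are non-colliding if for all $1\le j<k$: $v_j\neq u_j$ and $(v_j,v_{j+1})\neq(u_{j+1},u_j)$; if the paths have different lengths, the shorter one is extended by having its agent stay at its last vertex. A plan is non-colliding if every two of its paths are non-colliding. For $d\in\mathbb{N}$, a path $\pi'$ is a $d$-delay of $\pi=v_1\ldots v_m$ if $\pi'=v_1v_1^{k_1}v_2v_2^{k_2}\ldots v_mv_m^{k_m}$ with integers $k_i\ge0$, $\sum_i k_i=d$, where $v^{k}$ denotes $k$ additional repetitions of $v$. ACID (Avoiding Collisions by Introducing Delays): given $G$, a plan $P=\{\pi_1,\ldots,\pi_n\}$ and a budget $D\in\mathbb{N}$, the instance is solvable if there exist paths $\pi'_1,\ldots,\pi'_n$ with $\pi'_i$ a $d_i$-delay of $\pi_i$, $\sum_i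 d_i\le D$, and $\{\pi'_1,\ldots,\pi'_n\}$ non-colliding. *)

(* Defs.v *)
From mathcomp Require Import all_boot.
Set Implicit Arguments. Unset Strict Implicit. Unset Printing Implicit Defensive.

Definition is_path (V : finType) (E : rel V) (p : seq V) : bool :=
  match p with
  | [::] => false
  | v :: p' => path E v p'
  end.

Definition path_length (V : Type) (p : seq V) : nat := (size p).-1.

(* Vertex occupied at 0-indexed time t by an agent following p (whose first
   vertex is v); past the end of p the agent stays at its last vertex. *)
Definition pos (V : Type) (v : V) (p : seq V) (t : nat) : V :=
  nth (last v p) p t.

(* Non-colliding paths v_1..v_k and u_1..u_k (shorter one extended by waiting at
   its last vertex, so k = max of the sizes): for all 1 <= j < k,
   v_j <> u_j and (v_j, v_{j+1}) <> (u_{j+1}, u_j).  (0-indexed: j < k - 1.)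
   Paths are nonempty; the empty-sequence case is irrelevant and set to True. *)
Definition non_colliding (V : eqType) (p q : seq V) : Prop :=
  match p, q with
  | v :: _, u :: _ =>
      forall j, j.+1 < maxn (size p) (size q) ->
        pos v p j != pos u q j /\
        (pos v p j, pos v p j.+1) != (pos u q j.+1, pos u q j)
  | _, _ => True
  end.

(* p' is a d-delay of p = v_1 .. v_m : p' = v_1 v_1^{k_1} ... v_m v_m^{k_m}
   with k_i >= 0 and \sum_i k_i = d. *)
Definition is_delay (V : Type) (d : nat) (p p' : seq V) : Prop :=
  exists ks : seq nat,
    [/\ size ks = size p, sumn ks = d &
        p' = flatten [seq nseq k.+1 v | '(v, k) <- zip p ks]].

Definition is_plan (V : finType) (E : rel V) (n : nat) (s g : 'I_n -> V)
    (pi : 'I_n -> seq V) : Prop :=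
  forall i, [/\ is_path E (pi i), head (s i) (pi i) = s i &
                last (s i) (pi i) = g i].

Definition sum_of_costs (V : Type) (n : nat) (pi : 'I_n -> seq V) : nat :=
  \sum_(i < n) path_length (pi i).

Definition acid_solvable (V : finType) (n : nat) (pi : 'I_n -> seq V)
    (D : nat) : Prop :=
  exists (pi' : 'I_n -> seq V) (d : 'I_n -> nat),
    [/\ forall i, is_delay (d i) (pi i) (pi' i),
        \sum_(i < n) d i <= D &
        forall i j, i != j -> non_colliding (pi' i) (pi' j)].

(* Main.v *)
Require Import Defs.
From mathcomp Require Import all_boot zify.
Set Implicit Arguments. Unset Strict Implicit. Unset Printing Implicit Defensive.

Fixpoint Ix (ks : seq nat) (j : nat) : seq nat :=
  if ks is k :: ks' then nseq k.+1 j ++ Ix ks' j.+1 else [::].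

Definition expd (V : Type) (p : seq V) (ks : seq nat) :=
  flatten [seq nseq k.+1 v | '(v, k) <- zip p ks].

Definition rem_at (T : Type) (n : nat) (s : seq T) := take n s ++ drop n.+1 s.

Lemma size_Ix ks j : size (Ix ks j) = sumn ks + size ks.
Proof. elim: ks j => //= k ks IH j; rewrite size_cat size_nseq IH; lia. Qed.

Lemma Ix_S ks j : Ix ks j.+1 = map succn (Ix ks j).
Proof. elim: ks j => //= k ks IH j; by rewrite map_cat map_nseq IH. Qed.

Lemma expdE (V : Type) (x0 : V) p ks : size ks = size p ->
  expd p ks = map (nth x0 p) (Ix ks 0).
Proof.
elim: p ks => [|v p IH] [|k ks] //= [Hs].
rewrite /expd /= -/(expd p ks) IH // map_cat map_nseq /= Ix_S -map_comp.
done.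
Qed.

Lemma Ix_ge ks j x : x \in Ix ks j -> j <= x.
Proof.
elim: ks j => //= k ks IH j; rewrite inE mem_cat mem_nseq.
case/or3P => [/eqP->|/andP[_ /eqP->]|/IH] //.
by apply: leq_trans.
Qed.

Fixpoint decT (ks : seq nat) (t : nat) : seq nat :=
  if ks is k :: ks' then (if t < k then k.-1 :: ks' else k :: decT ks' (t - k.+1))
  else [::].

Lemma size_decT ks t : size (decT ks t) = size ks.
Proof. elim: ks t => //= k ks IH t; case: ifP => //= _; by rewrite IH. Qed.

Lemma rem_at_cat (T : Type) n (s1 s2 : seq T) :
  rem_at n (s1 ++ s2) = if n < size s1 then rem_at n s1 ++ s2
                        else s1 ++ rem_at (n - size s1) s2.
Proof.
rewrite /rem_at take_cat drop_cat; case: ifP => H1.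
  case: ifP => H2; first by rewrite catA.
  have E : n.+1 - size s1 = 0 by lia.
  rewrite E drop0 drop_oversize ?cats0 //; lia.
case: ifP => H2; first by lia.
rewrite catA; have -> : n.+1 - size s1 = (n - size s1).+1 by lia.
by [].
Qed.

Lemma rem_at_nseq (T : Type) n m (x : T) : n < m -> rem_at n (nseq m x) = nseq m.-1 x.
Proof.
move=> H; rewrite /rem_at take_nseq ?drop_nseq -?nseqD; last by lia.
by congr (nseq _ _); lia.
Qed.

Lemma decT_spec ks j t : t.+1 < size (Ix ks j) ->
  nth 0 (Ix ks j) t.+1 = nth 0 (Ix ks j) t ->
  Ix (decT ks t) j = rem_at t.+1 (Ix ks j) /\ (sumn (decT ks t)).+1 = sumn ks.
Proof.
elim: ks j t => [|k ks IH] j t //.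
change (Ix (k::ks) j) with (nseq k.+1 j ++ Ix ks j.+1).
change (decT (k::ks) t) with (if t < k then k.-1 :: ks else k :: decT ks (t - k.+1)).
rewrite size_cat size_nseq !nth_cat size_nseq rem_at_cat size_nseq => Hs.
case: (ltngtP t k) => Htk.
- have H1 : t.+1 < k.+1 by lia.
  have H2 : t < k.+1 by lia.
  rewrite H1 H2 => _; rewrite rem_at_nseq //=.
  case: k Htk {H1 H2 Hs} => // k _ /=; split => //; lia.
- have H1 : t.+1 < k.+1 = false by lia.
  have H2 : t < k.+1 = false by lia.
  rewrite H1 H2 => Heq.
  have E : t.+1 - k.+1 = (t - k.+1).+1 by lia.
  rewrite E in Heq *.
  have Hn : (t - k.+1).+1 < size (Ix ks j.+1) by lia.
  case: (IH j.+1 (t - k.+1) Hn Heq) => <- Hsum; split => //=; by rewrite -Hsum addnS.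
- rewrite Htk in Hs *; rewrite ltnSn ltnn subnn nth_nseq ltnSn => H; exfalso.
  have Hsz : 0 < size (Ix ks j.+1) by lia.
  have Hin := mem_nth 0 Hsz.
  have := Ix_ge Hin; rewrite H; lia.
Qed.

Lemma rem_at_cons (T : Type) t (a : T) s : rem_at t.+1 (a :: s) = a :: rem_at t s.
Proof. by []. Qed.

Lemma rem_at0 (T : Type) (a : T) s : rem_at 0 (a :: s) = s.
Proof. by rewrite /rem_at /= drop0. Qed.

Lemma nth_rem_at (T : Type) (x : T) s t u :
  nth x (rem_at t s) u = nth x s (if u < t then u else u.+1).
Proof.
elim: s t u => [|a s IH] t u.
  by rewrite /rem_at /= !nth_nil.
case: t => [|t]; first by rewrite rem_at0.
rewrite rem_at_cons; case: u => [|u] //=.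
by rewrite IH ltnS; case: ifP.
Qed.

Lemma size_rem_at (T : Type) t (s : seq T) :
  size (rem_at t s) = if t < size s then (size s).-1 else size s.
Proof. rewrite /rem_at size_cat size_take size_drop; case: ifP; lia. Qed.

Lemma rem_at_small (T : Type) t (s : seq T) : size s <= t -> rem_at t s = s.
Proof. move=> H; rewrite /rem_at take_oversize // drop_oversize ?cats0 //; lia. Qed.

Lemma map_rem_at (T U : Type) (f : T -> U) t s : map f (rem_at t s) = rem_at t (map f s).
Proof. by rewrite /rem_at map_cat map_take map_drop. Qed.

Definition rep (T : Type) (s : seq T) t := forall x, t.+1 < size s -> nth x s t.+1 = nth x s t.

Lemma pos_rep (T : Type) (v : T) s t : rep s t -> pos v s t = pos v s t.+1.
Proof.
rewrite /rep /pos => H.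
case: (ltnP t.+1 (size s)) => Hs; first by rewrite H.
case: (ltnP t (size s)) => Ht.
  have E : t = (size s).-1 by lia.
  rewrite [in RHS]nth_default // E nth_last.
  by case: s {H Hs Ht E}.
by rewrite !nth_default //; lia.
Qed.

Lemma last_rem_at (T : Type) (v : T) s t : rep s t -> last v (rem_at t.+1 s) = last v s.
Proof.
move=> H.
case: (ltnP t.+1 (size s)) => Hs; last by rewrite rem_at_small.
rewrite -!nth_last nth_rem_at size_rem_at Hs.
case: ifP => Hc.
  have E : t = (size s).-1.-1 by lia.
  rewrite -E -H //; congr nth; lia.
congr nth; lia.
Qed.

Lemma pos_rem (T : Type) (v : T) s t u : rep s t ->
  pos v (rem_at t.+1 s) u = pos v s (if u < t.+1 then u else u.+1).
Proof. by move=> H; rewrite /pos last_rem_at // nth_rem_at. Qed.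

Lemma pos_remA (T : Type) (v : T) s t u : rep s t -> u <= t ->
  pos v (rem_at t.+1 s) u = pos v s u.
Proof. by move=> H Hu; rewrite pos_rem // ifT. Qed.

Lemma pos_remB (T : Type) (v : T) s t u : rep s t -> t <= u ->
  pos v (rem_at t.+1 s) u = pos v s u.+1.
Proof.
move=> H Hu; rewrite pos_rem //; case: ifP => // Hc.
have E : u = t by lia.
by rewrite E pos_rep.
Qed.

Lemma nc_rem (V : eqType) (p q : seq V) t : rep p t -> rep q t ->
  non_colliding p q -> non_colliding (rem_at t.+1 p) (rem_at t.+1 q).
Proof.
case: p => [|a p0]; first by rewrite rem_at_small.
case: q => [|b q0]; first by move=> *; rewrite [rem_at _ [::]]rem_at_small //; case: (rem_at _ _).
move=> Hp Hq H.
rewrite !rem_at_cons /= -!rem_at_cons => j Hj.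
have {}Hj : j.+1 < maxn (size (rem_at t.+1 (a::p0))) (size (rem_at t.+1 (b::q0))) by [].
move: Hj; rewrite !size_rem_at => Hj.
have Hj2 : j.+1 < maxn (size (a::p0)) (size (b::q0)).
  move: Hj; case: ifP => H1; case: ifP => H2; lia.
case: (leqP j.+1 t) => Hjt.
  have A1 : j <= t by lia.
  rewrite (pos_remA _ Hp A1) (pos_remA _ Hp Hjt) (pos_remA _ Hq A1) (pos_remA _ Hq Hjt).
  exact: H.
have A1 : t <= j by lia.
have A2 : t <= j.+1 by lia.
rewrite (pos_remB _ Hp A1) (pos_remB _ Hp A2) (pos_remB _ Hq A1) (pos_remB _ Hq A2).
apply: H.
move: Hj; case: ifP => H1; case: ifP => H2; lia.
Qed.

Fixpoint chg (x : nat) (s : seq nat) : nat :=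
  if s is y :: s' then (y != x) + chg y s' else 0.

Definition adv (f : seq nat) (t : nat) : bool :=
  (t.+1 < size f) && (nth 0 f t.+1 != nth 0 f t).

Lemma count_adv x s N : \sum_(u < N) adv (x :: s) u <= chg x s.
Proof.
elim: s x N => [|y s IH] x N.
  by rewrite big1 // => u _; rewrite /adv /= ltnS leqn0.
case: N => [|N]; first by rewrite big_ord0.
rewrite big_ord_recl /=.
apply: leq_add; first by rewrite /adv /=.
exact: IH.
Qed.

Lemma chg_nseq x k s : chg x (nseq k x ++ s) = chg x s.
Proof. by elim: k => //= k ->; rewrite eqxx. Qed.

Lemma chg_Ix_any ks j x : chg x (Ix ks j) <= size ks.
Proof.
elim: ks j x => //= k ks IH j x.
rewrite chg_nseq.
have := IH j.+1 j; lia.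
Qed.

Lemma chg_Ix ks N : \sum_(u < N) adv (Ix ks 0) u <= (size ks).-1.
Proof.
case: ks => [|k ks].
  by rewrite big1 // => u _; rewrite /adv /=.
rewrite /= -/(nseq k 0 ++ Ix ks 1).
apply: leq_trans (count_adv _ _ _) _.
by rewrite chg_nseq chg_Ix_any.
Qed.

Definition good (V : eqType) n (pi : 'I_n -> seq V) (ks : 'I_n -> seq nat) :=
  (forall i, size (ks i) = size (pi i)) /\
  (forall i j, i != j -> non_colliding (expd (pi i) (ks i)) (expd (pi j) (ks j))).

Lemma step (V : eqType) (x0 : V) n (pi : 'I_n -> seq V) ks :
  (forall i, pi i != [::]) -> good pi ks ->
  (n - 1) * sum_of_costs pi < \sum_(i < n) sumn (ks i) ->
  exists ks', good pi ks' /\ \sum_(i < n) sumn (ks' i) < \sum_(i < n) sumn (ks i).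
Proof.
move=> Hne [Hsz Hnc] Hlt.
pose f i := Ix (ks i) 0.
pose M := \max_(i < n) size (f i).
have HfM : forall i, size (f i) <= M by move=> i; exact: (leq_bigmax (F := fun i => size (f i))).
have Hsf : forall i, size (f i) = sumn (ks i) + size (pi i) by move=> i; rewrite /f size_Ix Hsz.
have Hexp : forall i, expd (pi i) (ks i) = map (nth x0 (pi i)) (f i).
  by move=> i; rewrite /f (expdE x0) // Hsz.
case: (boolP [exists t : 'I_M.-1, [forall i, ~~ adv (f i) t]]) => [/existsP [t /forallP Ht] | Hno].
- have HtM : t.+1 < M by have := ltn_ord t; lia.
  have [i0 Hi0] : exists i0, t.+1 < size (f i0).
    case: (boolP [exists i, t.+1 < size (f i)]) => [/existsP [i Hi] | ]; first by exists i.
    rewrite negb_exists => /forallP Hall; exfalso.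
    have : M <= t.+1 by apply/bigmax_leqP => i _; rewrite leqNgt Hall.
    lia.
  have Hrep : forall i, t.+1 < size (f i) -> nth 0 (f i) t.+1 = nth 0 (f i) t.
    by move=> i H; have := Ht i; rewrite /adv H /= negbK => /eqP.
  pose ks' i := if t.+1 < size (f i) then decT (ks i) t else ks i.
  have Hsz' : forall i, size (ks' i) = size (pi i).
    by move=> i; rewrite /ks'; case: ifP => _; rewrite ?size_decT Hsz.
  have HI : forall i, Ix (ks' i) 0 = rem_at t.+1 (f i).
    move=> i; rewrite /ks'; case: ifP => H.
      by case: (decT_spec H (Hrep i H)).
    rewrite rem_at_small //; lia.
  have Hle : forall i, sumn (ks' i) <= sumn (ks i).
    move=> i; rewrite /ks'; case: ifP => H //.
    case: (decT_spec H (Hrep i H)) => _; lia.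
  have Hlt0 : sumn (ks' i0) < sumn (ks i0).
    rewrite /ks' Hi0; case: (decT_spec Hi0 (Hrep i0 Hi0)) => _; lia.
  exists ks'; split.
  + split => // i j Hij.
    rewrite (expdE x0 (Hsz' i)) (expdE x0 (Hsz' j)) !HI !map_rem_at -!Hexp.
    have Hr : forall k, rep (expd (pi k) (ks k)) t.
      move=> k x; rewrite Hexp size_map => H.
      rewrite !(nth_map 0) //; last by lia.
      by rewrite Hrep.
    apply: nc_rem => //; exact: Hnc.
  + rewrite (bigD1 i0) //= [X in _ < X](bigD1 i0) //=.
    have H2 : \sum_(i < n | i != i0) sumn (ks' i) <= \sum_(i < n | i != i0) sumn (ks i).
      by apply: leq_sum => i _; exact: Hle.
    by rewrite -addSn; exact: leq_add Hlt0 H2.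
- exfalso.
  have Hall : forall t : 'I_M.-1, exists i, adv (f i) t.
    move: Hno; rewrite negb_exists => /forallP H t.
    move: (H t); rewrite negb_forall => /existsP [i]; rewrite negbK => Hi.
    by exists i.
  set S := sum_of_costs pi.
  have H1 : M.-1 <= S.
    have -> : M.-1 = \sum_(t < M.-1) 1 by rewrite sum_nat_const card_ord muln1.
    apply: (@leq_trans (\sum_(t < M.-1) \sum_(i < n) adv (f i) t)).
      apply: leq_sum => t _; case: (Hall t) => i Hi.
      by rewrite (bigD1 i) //= Hi.
    rewrite exchange_big /S /sum_of_costs; apply: leq_sum => i _.
    apply: leq_trans (chg_Ix _ _) _.
    by rewrite Hsz /path_length.
  have H2 : \sum_(i < n) sumn (ks i) <= \sum_(i < n) (S - path_length (pi i)).
    apply: leq_sum => i _.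
    have := HfM i; rewrite Hsf.
    have : 0 < size (pi i) by rewrite lt0n size_eq0.
    rewrite /path_length; lia.
  have H3 : \sum_(i < n) (S - path_length (pi i)) + S = n * S.
    rewrite {2}/S /sum_of_costs -big_split /=.
    rewrite (eq_bigr (fun _ => S)); first by rewrite sum_nat_const card_ord.
    move=> i _; rewrite subnK // /S /sum_of_costs (bigD1 i) //=; exact: leq_addr.
  move: Hlt; rewrite -/S mulnBl mul1n; clearbody S; lia.
Qed.

Lemma iter_step (V : eqType) (x0 : V) n (pi : 'I_n -> seq V) :
  (forall i, pi i != [::]) -> forall m ks, \sum_(i < n) sumn (ks i) <= m -> good pi ks ->
  exists ks', good pi ks' /\ \sum_(i < n) sumn (ks' i) <= (n - 1) * sum_of_costs pi.
Proof.
move=> Hne; elim => [|m IH] ks Hm Hg.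
  by exists ks; split => //; apply: leq_trans Hm _.
case: (leqP (\sum_(i < n) sumn (ks i)) ((n - 1) * sum_of_costs pi)) => Hc.
  by exists ks.
have [ks'' [Hg' Hl]] := step x0 Hne Hg Hc.
apply: (IH ks'') => //; lia.
Qed.

Theorem lemma1 (V : finType) (E : rel V) (n : nat) (s g : 'I_n -> V)
    (pi : 'I_n -> seq V) (D : nat) :
  (forall v : V, E v v) ->
  is_plan E s g pi ->
  acid_solvable pi D ->
  acid_solvable pi ((n - 1) * sum_of_costs pi).
Proof.
move=> _ Hplan [pi' [d [Hdel Hsum Hnc]]].
have Hne : forall i, pi i != [::] by move=> i; case: (Hplan i); case: (pi i).
case: (boolP [exists i : 'I_n, true]) => [/existsP [i0 _] | Hn0]; last first.
  exists pi', d; split => //.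
  rewrite big1 // => i; move: Hn0; rewrite negb_exists => /forallP /(_ i) //.
have [ks Hks] := fin_all_exists Hdel.
have Hg : good pi ks.
  split; first by move=> i; case: (Hks i).
  move=> i j Hij.
  case: (Hks i) => _ _ Ei; case: (Hks j) => _ _ Ej; rewrite /expd -Ei -Ej.
  exact: Hnc.
have [ks' [[Hsz' Hnc'] Hb]] := iter_step (s i0) Hne (leqnn _) Hg.
exists (fun i => expd (pi i) (ks' i)), (fun i => sumn (ks' i)); split => //.
by move=> i; exists (ks' i); split.
Qed.
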